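(* Let $n\ge1$, $\varepsilon\in D$, $s\in D^n$, and let $n'$ be the index produced by the recursive construction below. Then $L_n=n'+1-L_{n'}$ (with the convention $L_{-1}=0$).
   Context: Let $D$ be a commutative integral domain with $1\neq 0$. For $s=(s_1,\dots,s_n)\in D^n$ put $\underline{s}=s_1x^{-1}+\cdots+s_nx^{-n}\in D[x,x^{-1}]$; for a Laurent polynomial $F$, $F_k$ is the coefficient of $x^k$; $s^{(i)}=(s_1,\dots,s_i)$. A polynomial $f\in D[x]$ is an annihilator of $s$ if $f=0$, or $d=\deg f\ge0$ and $(f\cdot\underline{s})_{d-j}=0$ for $d+1\le j\le n$. $L(s)$ is the least degree of a nonzero annihilator of $s$, $L_j=L(s^{(j)})$, $L_0=0$. For nonzero $f\in D[x]$ and $t\in D^m$, $\Delta(f,t)=(f\cdot\underline{t})_{\deg f-m}$. Recursive construction (relative to a fixed $\varepsilon\in D$): put $\mu^{(-1)}=\varepsilon$, $\mu^{(0)}=1$, $\Delta_0=1$, $0'=-1$, and for $j\ge 0$ let $e_j=j+1-2\deg\mu^{(j)}$ (so $e_0=1$). For $j=1,\dots,n$ successively define: $\Delta_j=\Delta(\mu^{(j-1)},s^{(j)})$; the index $j'=(j-1)'$ if $\Delta_j=0$ or $e_{j-1}\le 0$, and $j'=j-1$ if $\Delta_j\neq0$ and $e_{j-1}>0$; $\Delta'_j=\Delta_{(j-1)'+1}$; and $\mu^{(j)}=\mu^{(j-1)}$ if $\Delta_j=0$, otherwise $\mu^{(j)}=\Delta'_j\,x^{\max\{e_{j-1},0\}}\mu^{(j-1)}-\Delta_j\,x^{\max\{-e_{j-1},0\}}\mu^{((j-1)')}$.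 *)

(* Defs.v *)
From HB Require Import structures.
From mathcomp Require Import all_boot all_order all_algebra.
From Stdlib Require Import ClassicalEpsilon.
Set Implicit Arguments. Unset Strict Implicit. Unset Printing Implicit Defensive.
Import Order.TTheory GRing.Theory Num.Theory.
Local Open Scope ring_scope.

Section BM.
Variable D : idomainType.

(* degree of a polynomial (used only on nonzero polynomials in the paper) *)
Definition pdeg (f : {poly D}) : nat := (size f).-1.

Definition coefz (f : {poly D}) (z : int) : D :=
  match z with Posz m => f`_m | Negz _ => 0 end.

(* (f * underline t)_k  where underline t = t_1 x^-1 + ... + t_m x^-m,
   t = [:: t_1; ...; t_m] (t`_i is t_(i+1)). *)
Definition lcoef (f : {poly D}) (t : seq D) (k : int) : D :=
  \sum_(i < size t) coefz f (k + i%:Z + 1) * t`_i.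

Definition annihilator (f : {poly D}) (s : seq D) : Prop :=
  f = 0 \/ forall j : nat, (pdeg f < j <= size s)%N ->
                          lcoef f s ((pdeg f)%:Z - j%:Z) = 0.

Definition pbool (P : Prop) : bool :=
  if excluded_middle_informative P then true else false.

Definition has_ann_deg (s : seq D) (d : nat) : bool :=
  pbool (exists f : {poly D}, [/\ f != 0, pdeg f = d & annihilator f s]).

Lemma has_ann_deg_ex (s : seq D) : exists d, has_ann_deg s d.
Proof.
exists (size s); rewrite /has_ann_deg /pbool.
case: excluded_middle_informative => // [[]].
exists 'X^(size s); split.
- by rewrite -size_poly_eq0 size_polyXn.
- by rewrite /pdeg size_polyXn.
- right=> j; rewrite /pdeg size_polyXn /= => /andP[H1 H2].
  by move: (leq_trans H1 H2); rewrite ltnn.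
Qed.

Definition L (s : seq D) : nat := ex_minn (has_ann_deg_ex s).

(* State after step j of the recursive construction:
   mu = mu^(j), mup = mu^(j'), jp = j', dp = Delta_{j'+1}. *)
Record bmstate := BMState { mu : {poly D}; mup : {poly D}; jp : int; dp : D }.

Definition bm_init (eps : D) : bmstate := BMState 1 eps%:P (-1) 1.

Definition bm_step (s : seq D) (j : nat) (st : bmstate) : bmstate :=
  let e : int := j%:Z - 2%:Z * (pdeg (mu st))%:Z in
  let Dj := lcoef (mu st) (take j s) ((pdeg (mu st))%:Z - j%:Z) in
  if Dj == 0 then st else
  let newmu := dp st *: ((if 0 < e then 'X^(absz e) else 1) * mu st)
               - Dj *: ((if 0 < e then 1 else 'X^(absz e)) * mup st) in
  if 0 < e then BMState newmu (mu st) (j.-1)%:Z Dj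
  else BMState newmu (mup st) (jp st) (dp st).

Fixpoint bm_run (s : seq D) (eps : D) (j : nat) : bmstate :=
  match j with
  | 0 => bm_init eps
  | j'.+1 => bm_step s j'.+1 (bm_run s eps j')
  end.

Definition Lz (s : seq D) (k : int) : nat :=
  match k with Posz m => L (take m s) | Negz _ => 0%N end.

End BM.

(* Main.v *)
Require Import Defs.
From Stdlib Require Import ZArith Lia ClassicalEpsilon.
From HB Require Import structures.
From mathcomp Require Import all_boot all_order all_algebra.
Import Order.TTheory GRing.Theory Num.Theory.
Local Open Scope ring_scope.

Ltac nlia := repeat match goal with
 | H : is_true (_ <= _)%N |- _ => move/ssrnat.leP: H => H
 | H : is_true (_ < _)%N |- _ => move/ssrnat.ltP: H => H
 | H : is_true (~~ (_ <= _)%N) |- _ => move/negP: H => H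
 | H : is_true (~~ (_ < _)%N) |- _ => move/negP: H => H
 | |- is_true (_ <= _)%N => apply/ssrnat.leP
 | |- is_true (_ < _)%N => apply/ssrnat.ltP
 end; unfold addn, subn, muln in *; lia.

Definition toZ (x : int) : Z := match x with Posz n => Z.of_nat n | Negz n => Z.sub (Z.opp (Z.of_nat n)) 1 end.
Lemma toZ_inj x y : toZ x = toZ y -> x = y.
Proof. case: x => m; case: y => k /=; move=> h; f_equal; lia. Qed.
Lemma toZN x : toZ (- x) = Z.opp (toZ x).
Proof. case: x => [[|m]|m] /=; lia. Qed.
Lemma toZD x y : toZ (x + y) = Z.add (toZ x) (toZ y).
Proof.
case: x => m; case: y => k; rewrite /GRing.add /=.
- unfold addn. lia.
- case: ifP => h /=; [move/ssrnat.ltP: h => h|move/negbT/ssrnat.ltP: h => h]; unfold addn, subn in *; lia.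
- case: ifP => h /=; [move/ssrnat.ltP: h => h|move/negbT/ssrnat.ltP: h => h]; unfold addn, subn in *; lia.
- unfold addn. lia.
Qed.
Lemma toZ_nat (m : nat) : toZ m%:Z = Z.of_nat m. Proof. by []. Qed.
Lemma toZB x y : toZ (x - y) = Z.sub (toZ x) (toZ y).
Proof. by rewrite toZD toZN. Qed.
Lemma toZ1 : toZ 1 = Z.of_nat 1. Proof. by []. Qed.
Lemma toZ0 : toZ 0 = Z.of_nat 0. Proof. by []. Qed.
Lemma toZMn (m k : nat) : toZ (m%:Z * k%:Z) = Z.mul (Z.of_nat m) (Z.of_nat k).
Proof. by rewrite -PoszM toZ_nat /muln Nat2Z.inj_mul. Qed.
Lemma toZNegz n : toZ (Negz n) = Z.sub (Z.opp (Z.of_nat n)) 1. Proof. by []. Qed.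
Lemma toZ_le x y : (x <= y) <-> Z.le (toZ x) (toZ y).
Proof.
case: x => m; case: y => k /=.
- rewrite lez_nat; split; [move/ssrnat.leP; lia| move=> h; apply/ssrnat.leP; lia].
- split => //; lia.
- split => //; lia.
- rewrite !NegzE lerN2 lez_nat; split; [move/ssrnat.leP; lia| move=> h; apply/ssrnat.leP; lia].
Qed.
Lemma toZ_lt x y : (x < y) <-> Z.lt (toZ x) (toZ y).
Proof.
rewrite ltNge; split.
- move/negP => h; case: (Z.lt_ge_cases (toZ x) (toZ y)) => // h'.
  by case: h; apply/toZ_le.
- move=> h; apply/negP => /toZ_le; lia.
Qed.

Ltac zlia := repeat match goal with
 | H : is_true (@Order.le _ _ _ _) |- _ => move/toZ_le: H => H
 | H : is_true (@Order.lt _ _ _ _) |- _ => move/toZ_lt: H => H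
 | H : ~ is_true (@Order.le _ _ _ _) |- _ => move/toZ_le: H => H
 | H : ~ is_true (@Order.lt _ _ _ _) |- _ => move/toZ_lt: H => H
 | H : is_true (~~ @Order.le _ _ _ _) |- _ => rewrite -ltNge in H
 | H : is_true (~~ @Order.lt _ _ _ _) |- _ => rewrite -leNgt in H
 | H : (@Order.le _ _ _ _) = false |- _ => move/negbT: H => H
 | H : (@Order.lt _ _ _ _) = false |- _ => move/negbT: H => H
 | H : context[toZ (Negz _)] |- _ => rewrite toZNegz in H
 | |- context[toZ (Negz _)] => rewrite toZNegz
 | H : @eq _ _ _ |- _ => move/(f_equal toZ): H => H
 | |- is_true (@Order.le _ _ _ _) => apply/toZ_le
 | |- is_true (@Order.lt _ _ _ _) => apply/toZ_lt
 | |- @eq _ _ _ => apply: toZ_inj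
 | H : context[toZ (_ + _)] |- _ => rewrite toZD in H
 | H : context[toZ (_ - _)] |- _ => rewrite toZB in H
 | H : context[toZ (- _)] |- _ => rewrite toZN in H
 | H : context[toZ (Posz _ * Posz _)] |- _ => rewrite toZMn in H
 | H : context[toZ (Posz _)] |- _ => rewrite toZ_nat in H
 | H : context[toZ 1] |- _ => rewrite toZ1 in H
 | H : context[toZ 0] |- _ => rewrite toZ0 in H
 | |- context[toZ (_ + _)] => rewrite toZD
 | |- context[toZ (_ - _)] => rewrite toZB
 | |- context[toZ (- _)] => rewrite toZN
 | |- context[toZ (Posz _ * Posz _)] => rewrite toZMn
 | |- context[toZ (Posz _)] => rewrite toZ_nat
 | |- context[toZ 1] => rewrite toZ1
 | |- context[toZ 0] => rewrite toZ0
 end; nlia.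

Section Main.
Variable D : idomainType.
Variable s : seq D.

Definition A (f : {poly D}) (m : nat) (k : int) : D :=
  \sum_(i < m) coefz f (k + i%:Z + 1) * s`_i.
Definition disc (f : {poly D}) (m : nat) : D := A f m ((pdeg f)%:Z - m%:Z).
Definition ann (f : {poly D}) (m : nat) : Prop :=
  forall j, (pdeg f < j <= m)%N -> disc f j = 0.

Lemma coefz_big (f : {poly D}) z : (pdeg f)%:Z < z -> coefz f z = 0.
Proof.
case: z => // p; rewrite ltz_nat /pdeg => h /=; apply: nth_default; exact: leq_trans (leqSpred _) h.
Qed.

Lemma coefz_neg (f : {poly D}) z : z < 0 -> coefz f z = 0.
Proof. by case: z. Qed.

Lemma A_trunc f m mm k : (mm <= m)%N -> (pdeg f)%:Z <= k + mm%:Z ->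
  A f m k = A f mm k.
Proof.
move=> h1 h2; rewrite /A -(subnKC h1) big_split_ord /= [X in _ + X]big1 ?addr0 // => i _.
rewrite coefz_big ?mul0r //. zlia.
Qed.

Lemma lcoef_take f m k : (m <= size s)%N -> lcoef f (take m s) k = A f m k.
Proof.
move=> h; rewrite /lcoef /A size_takel //; apply: eq_bigr => i _.
by rewrite nth_take.
Qed.

Lemma A_rec f c : A f (c + (pdeg f).+1) ((pdeg f)%:Z - (c + (pdeg f).+1)%:Z) =
  \sum_(k < (pdeg f).+1) f`_k * s`_(c + k)%N.
Proof.
rewrite /A big_split_ord /= big1 ?add0r.
- apply: eq_bigr => k _ /=.
  have -> : (pdeg f)%:Z - (c + (pdeg f).+1)%:Z + (c + k)%:Z + 1 = k%:Z. zlia.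
  by [].
- move=> i _; have := ltn_ord i => hi; rewrite coefz_neg ?mul0r //; zlia.
Qed.

Lemma disc_rec f m : (pdeg f < m)%N ->
  disc f m = \sum_(k < (pdeg f).+1) f`_k * s`_(m - (pdeg f).+1 + k)%N.
Proof.
move=> h; rewrite /disc.
have Em : m = ((m - (pdeg f).+1) + (pdeg f).+1)%N by nlia.
by rewrite [in LHS]Em A_rec.
Qed.


Lemma massey (f g : {poly D}) j : (pdeg f < j)%N ->
  (forall m, (pdeg f < m < j)%N -> disc f m = 0) -> disc f j != 0 ->
  g != 0 -> (forall m, (pdeg g < m <= j)%N -> disc g m = 0) ->
  (j - pdeg f <= pdeg g)%N.
Proof.
move=> hfj hf hd gnz hg; rewrite leqNgt; apply/negP => hb.
set a := pdeg f in hfj hf hd hb *; set b := pdeg g in hg hb *.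
pose c := (j - a - b - 1)%N.
pose S := \sum_(k < a.+1) \sum_(l < b.+1) f`_k * g`_l * s`_(c + k + l)%N.
have S1 : S = 0.
  rewrite /S big1 // => k _.
  have hk := ltn_ord k.
  rewrite (eq_bigr (fun l : 'I_b.+1 => f`_k * (g`_l * s`_(c + k + l)%N)));
    last by move=> l _; rewrite mulrA.
  rewrite -big_distrr /=.
  have -> : \sum_(l < b.+1) g`_l * s`_(c + k + l)%N = disc g (c + k + b.+1)%N.
    rewrite disc_rec -/b; last by nlia.
    by apply: eq_bigr => l _; rewrite addnK.
  rewrite hg ?mulr0 //; apply/andP; split; nlia.
have S2 : S = g`_b * disc f j.
  rewrite /S exchange_big /= big_ord_recr /= [X in X + _]big1.
  - rewrite add0r (eq_bigr (fun k : 'I_a.+1 => g`_b * (f`_k * s`_(j - a.+1 + k)%N))).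
      by rewrite -big_distrr /= disc_rec.
    move=> k _; rewrite -mulrA mulrCA; congr (_ * (_ * nth _ _ _)); rewrite /=; nlia.
  - move=> l _; have hl := ltn_ord l.
    rewrite (eq_bigr (fun k : 'I_a.+1 => g`_l * (f`_k * s`_(c + l + k)%N))).
      rewrite -big_distrr /=.
      have -> : \sum_(k < a.+1) f`_k * s`_(c + l + k)%N = disc f (c + l + a.+1)%N.
        rewrite disc_rec -/a; last by nlia.
        by apply: eq_bigr => k _; rewrite addnK.
      rewrite hf ?mulr0 //; apply/andP; split; nlia.
    move=> k _; rewrite -mulrA mulrCA; congr (_ * (_ * nth _ _ _)); rewrite /=; nlia.
have : g`_b * disc f j = 0 by rewrite -S2 S1.
move/eqP; rewrite mulf_eq0 (negbTE hd) orbF.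
have -> : g`_b = lead_coef g by [].
by rewrite lead_coef_eq0 (negbTE gnz).
Qed.


Lemma size_pdeg (p : {poly D}) : p != 0 -> size p = (pdeg p).+1.
Proof. by move=> h; rewrite /pdeg prednK // lt0n size_poly_eq0. Qed.

Lemma coefz_shift (c : D) (a : nat) (p : {poly D}) z :
  coefz (c *: ('X^a * p)) z = c * coefz p (z - a%:Z).
Proof.
case: z => [q|q] /=.
- rewrite coefZ coefXnM; case: ltnP => h.
  + by rewrite coefz_neg ?mulr0 //; zlia.
  + by have -> : q%:Z - a%:Z = (q - a)%N%:Z by zlia.
- by rewrite coefz_neg ?mulr0 // NegzE; zlia.
Qed.

Lemma coefzB (p q : {poly D}) z : coefz (p - q) z = coefz p z - coefz q z.
Proof. by case: z => /= [k|k]; [rewrite coefB | rewrite subr0]. Qed.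

Lemma A_new (c1 c2 : D) (a b : nat) (p q : {poly D}) m k :
  A (c1 *: ('X^a * p) - c2 *: ('X^b * q)) m k =
  c1 * A p m (k - a%:Z) - c2 * A q m (k - b%:Z).
Proof.
rewrite /A !big_distrr /= -sumrB; apply: eq_bigr => i _.
rewrite coefzB !coefz_shift mulrBl !mulrA.
have -> : k + i%:Z + 1 - a%:Z = k - a%:Z + i%:Z + 1 by zlia.
by have -> : k + i%:Z + 1 - b%:Z = k - b%:Z + i%:Z + 1 by zlia.
Qed.

Lemma step_poly (mu nu : {poly D}) (c1 c2 : D) (a b j : nat) :
  mu != 0 -> ann mu j -> c1 != 0 -> c2 != 0 -> disc mu j.+1 = c2 ->
  ((size nu <= 1)%N /\ b = 0%N /\ a = j.+1) \/
  (exists j', [/\ (j' < j)%N, nu != 0, ann nu j', disc nu j'.+1 = c1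
      & (a + pdeg mu + j' = b + pdeg nu + j)%N]) ->
  [/\ c1 *: ('X^a * mu) - c2 *: ('X^b * nu) != 0,
      pdeg (c1 *: ('X^a * mu) - c2 *: ('X^b * nu)) = (a + pdeg mu)%N &
      ann (c1 *: ('X^a * mu) - c2 *: ('X^b * nu)) j.+1].
Proof.
move=> munz hmu c1nz c2nz hd hcase.
set P := c1 *: ('X^a * mu) - c2 *: ('X^b * nu).
have hsz1 : size (c1 *: ('X^a * mu)) = (a + (pdeg mu).+1)%N.
  by rewrite size_scale // mulrC size_mulXn // size_pdeg.
have hsz : (size (c2 *: ('X^b * nu)) < size (c1 *: ('X^a * mu)))%N.
  rewrite hsz1; apply: leq_ltn_trans (size_scale_leq _ _) _.
  case: hcase => [[hn [-> ->]]|[j' [hj' nunz _ _ he]]].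
  - rewrite expr0 mul1r; nlia.
  - rewrite mulrC size_mulXn // size_pdeg //; nlia.
have hsP : size P = (a + (pdeg mu).+1)%N by rewrite /P size_polyDl ?size_polyN.
have Pnz : P != 0 by rewrite -size_poly_eq0 hsP addnS.
have hdP : pdeg P = (a + pdeg mu)%N by rewrite /pdeg hsP addnS.
split => // m /andP[h1 h2]; rewrite hdP in h1.
case: hcase => [[hn [hb ha]]|[j' [hj' nunz hnu hdn he]]].
  exfalso; nlia.
rewrite /disc hdP /P A_new.
have E1 : A mu m ((a + pdeg mu)%N%:Z - m%:Z - a%:Z) = disc mu m.
  by rewrite /disc; congr A; zlia.
have E2 : A nu m ((a + pdeg mu)%N%:Z - m%:Z - b%:Z) = disc nu (m - (j - j'))%N.
  rewrite /disc (@A_trunc _ m (m - (j - j'))%N); last (by zlia); last by nlia.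
  by congr A; zlia.
rewrite E1 E2; case: (ltngtP m j.+1) => hm.
- rewrite hmu ?hnu ?mulr0 ?subrr //; apply/andP; split; nlia.
- exfalso; nlia.
- have -> : (m - (j - j'))%N = j'.+1 by nlia.
  by rewrite hm hd hdn mulrC subrr.
Qed.


Lemma L_spec (t : seq D) : exists f : {poly D}, [/\ f != 0, pdeg f = L t & annihilator f t].
Proof.
rewrite /L; case: ex_minnP => m hm _; move: hm; rewrite /has_ann_deg /pbool.
by case: excluded_middle_informative => // [[f [h1 h2 h3]]] _; exists f.
Qed.

Lemma L_min (t : seq D) f : f != 0 -> annihilator f t -> (L t <= pdeg f)%N.
Proof.
move=> h1 h2; rewrite /L; case: ex_minnP => m _ hmin; apply: hmin.
by rewrite /has_ann_deg /pbool; case: excluded_middle_informative => // [[]]; exists f.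
Qed.

Lemma lcoef_disc f m j : (m <= size s)%N -> (j <= m)%N ->
  lcoef f (take m s) ((pdeg f)%:Z - j%:Z) = disc f j.
Proof.
move=> hm hj; rewrite lcoef_take // (@A_trunc _ m j) //; zlia.
Qed.

Lemma ann_take f m : (m <= size s)%N -> f != 0 ->
  annihilator f (take m s) <-> ann f m.
Proof.
move=> hm fnz; rewrite /annihilator /ann size_takel //; split.
- case=> [fz|h j hj]; first by move: fnz; rewrite fz eqxx.
  by rewrite -(@lcoef_disc _ m) //; [apply: h | case/andP: hj].
- move=> h; right => j hj; rewrite lcoef_disc //; [exact: h | by case/andP: hj].
Qed.

Variable eps : D.

Definition Inv (j : nat) (st : bmstate D) : Prop :=
  [/\ mu st != 0, ann (mu st) j, pdeg (mu st) = L (take j s), dp st != 0 &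
   ((jp st = -1 /\ Defs.mup st = eps%:P) \/
   (exists j' : nat, [/\ jp st = j'%:Z, (j' < j)%N, Defs.mup st != 0,
       pdeg (Defs.mup st) = L (take j' s) & ann (Defs.mup st) j' /\ disc (Defs.mup st) j'.+1 = dp st]))] /\
   (L (take j s))%:Z = jp st + 1 - (Lz s (jp st))%:Z.

Lemma Lz_m1 : Lz s (-1) = 0%N. Proof. by []. Qed.
Lemma Lz_nat (m : nat) : Lz s m%:Z = L (take m s). Proof. by []. Qed.

Lemma inv0 : Inv 0 (bm_run s eps 0).
Proof.
have h1 : pdeg (1 : {poly D}) = 0%N by rewrite /pdeg size_poly1.
have hL : L (take 0 s) = 0%N.
  apply/eqP; rewrite -leqn0 -h1; apply: L_min; first exact: oner_neq0.
  by right => j; rewrite h1 take0 /= => /andP[? ?]; nlia.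
split; [split => //= |].
- exact: oner_neq0.
- by move=> j; rewrite h1 => /andP[? ?]; nlia.
- by rewrite h1 hL.
- exact: oner_neq0.
- by left.
- by rewrite hL Lz_m1.
Qed.

Lemma inv_step j : (j < size s)%N -> Inv j (bm_run s eps j) ->
  Inv j.+1 (bm_run s eps j.+1).
Proof.
move=> hj [[munz hmu hdmu dpnz hjp] hL].
rewrite /= /bm_step /=.
set st := bm_run s eps j in munz hmu hdmu dpnz hjp hL *.
rewrite (@lcoef_disc _ j.+1 j.+1) //.
have [g [gnz hdg hg]] := L_spec (take j.+1 s).
move/(@ann_take g j.+1 hj gnz): hg => hg.
have F1 : (L (take j s) <= L (take j.+1 s))%N.
  rewrite -hdg; apply: (@L_min _ g gnz); apply/(@ann_take g j (ltnW hj) gnz).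
  by move=> m /andP[h1 h2]; apply: hg; rewrite h1 /= (leq_trans h2).
have hLj : (L (take j s) <= j)%N.
  case: hjp => [[E _]|[j' [E hj' _ _ _]]]; move: hL; rewrite E ?Lz_m1 ?Lz_nat => hL; zlia.
case: eqP => hD.
- have hmu' : ann (mu st) j.+1.
    move=> m /andP[h1 h2]; case: (ltngtP m j.+1) => hm.
    + by apply: hmu; rewrite h1.
    + exfalso; nlia.
    + by rewrite hm.
  have HL : L (take j.+1 s) = L (take j s).
    have h := @L_min _ _ munz (proj2 (@ann_take _ j.+1 hj munz) hmu').
    by apply/eqP; rewrite eqn_leq F1 andbT -hdmu.
  split; [split|] => //.
  + by rewrite HL.
  + case: hjp => [h|[j' [h1 h2 h3 h4 h5]]]; [by left| right; exists j'; split => //].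
    exact: leqW.
  + by rewrite HL.
- have hD' : disc (mu st) j.+1 != 0 by apply/eqP.
  have F2 : (j.+1 - L (take j s) <= L (take j.+1 s))%N.
    rewrite -hdg -hdmu; apply: (@massey (mu st) g j.+1 _ _ hD' gnz hg).
    + rewrite hdmu; nlia.
    + move=> m /andP[h1 h2]; apply: hmu; rewrite h1 /=; nlia.
  case: ifP => he.
  + have Ee : (j.+1)%:Z - 2%:Z * (pdeg (mu st))%:Z = (j.+1 - pdeg (mu st) - pdeg (mu st))%N%:Z by zlia.
    have he' := he; rewrite Ee in he'; rewrite Ee he' /=.
    have := @step_poly (mu st) (Defs.mup st) (dp st) (disc (mu st) j.+1)
      (j.+1 - pdeg (mu st) - pdeg (mu st))%N 0 j munz hmu dpnz hD' erefl.
    case.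
    * case: hjp => [[E1 E2]|[j' [E1 h2 h3 h4 [h5 h6]]]].
      - left; split; first by rewrite E2 size_polyC_leq1.
        split => //; move: hL; rewrite E1 Lz_m1 -hdmu => hL; zlia.
      - right; exists j'; split => //.
        move: hL; rewrite E1 Lz_nat -hdmu -h4 => hL; zlia.
    rewrite expr0 => Pnz hdP hP.
    have HL : L (take j.+1 s) = (j.+1 - L (take j s))%N.
      have := @L_min _ _ Pnz (proj2 (@ann_take _ j.+1 hj Pnz) hP); rewrite hdP -hdmu => h.
      rewrite hdmu in h he *; apply/eqP; rewrite eqn_leq; apply/andP; split; zlia.
    split; [split|] => //=.
    * by rewrite hdP HL -hdmu; nlia.
    * by right; exists j; split.
    * rewrite HL; zlia.
  + have Ee : (j.+1)%:Z - 2%:Z * (pdeg (mu st))%:Z = - (pdeg (mu st) + pdeg (mu st) - j.+1)%N%:Z by zlia.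
    have he' := he; rewrite Ee in he'; rewrite Ee he' abszN /=.
    have := @step_poly (mu st) (Defs.mup st) (dp st) (disc (mu st) j.+1)
      0 (pdeg (mu st) + pdeg (mu st) - j.+1)%N j munz hmu dpnz hD' erefl.
    case.
    * case: hjp => [[E1 E2]|[j' [E1 h2 h3 h4 [h5 h6]]]].
      - exfalso; move: hL; rewrite E1 Lz_m1 -hdmu => hL; zlia.
      - right; exists j'; split => //.
        move: hL; rewrite E1 Lz_nat -hdmu -h4 => hL; zlia.
    rewrite expr0 => Pnz hdP hP.
    have HL : L (take j.+1 s) = L (take j s).
      have := @L_min _ _ Pnz (proj2 (@ann_take _ j.+1 hj Pnz) hP); rewrite hdP -hdmu => h.
      rewrite hdmu in h; apply/eqP; rewrite eqn_leq; apply/andP; split; nlia.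
    split; [split|] => //=.
    * by rewrite hdP HL -hdmu.
    * case: hjp => [h|[j' [h1 h2 h3 h4 h5]]]; [by left| right; exists j'; split => //].
      exact: leqW.
    * by rewrite HL.
Qed.

Lemma inv_all j : (j <= size s)%N -> Inv j (bm_run s eps j).
Proof.
elim: j => [|j IH] hj; first exact: inv0.
by apply: inv_step => //; apply: IH; apply: ltnW.
Qed.

End Main.

Theorem mainTheorem6 (D : idomainType) (n : nat) (eps : D) (s : seq D)
  (Hsize : size s = n) (Hn : (1 <= n)%N) :
  let n' := jp (bm_run s eps n) in
  ((L (take n s))%:Z = n' + 1 - (Lz s n')%:Z)%R.
Proof.
move=> n'; have [_ h] := @inv_all D s eps n (eq_leq (esym Hsize)).
exact: h.
Qed.
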